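(* Let $F$ be a maximal triangle-free graph and let $G$ be a triangle-free graph having the $F$-twin property. Let $H$ be a subgraph of $G$ isomorphic to $F$, let $z\in V(H)$ and let $z'\in V(G)\setminus V(H)$ be an $H$-twin of $z$, and set $H'=H(z')$. If a vertex $q'\in V(G)$ is an $H'$-twin of some $q\in V(H)\setminus\{z\}$, then $q'$ is also an $H$-twin of $q$.
   Context: $\mathrm N(v)$ denotes the neighbourhood of $v$ in $G$. For a subgraph $H$ of $G$, $q\in V(H)$ and $q'\in V(G)$, $q'$ is an $H$-twin of $q$ if $\mathrm N(q)\cap V(H)=\mathrm N(q')\cap V(H)$. For $q'\notin V(H)$ an $H$-twin of $q\in V(H)$, $H(q')$ denotes the graph obtained from $H$ by deleting $q$ and adding $q'$ together with all edges of $G$ between $q'$ and $V(H)\setminus\{q\}$ (this graph is isomorphic to $H$). For graphs $F,G$ and $e\in E(F)$, $G$ has the $(F,e)$-twin property if whenever $H\subseteq G$ is a subgraph isomorphic to $F$, $qz\in E(H)$ corresponds to $e$ under some isomorphism, and $q',z'\in V(G)$ are $H$-twins of $q,z$ respectively, then $q'z'\in E(G)$. $G$ has the $F$-twin property if it has the $(F,e)$-twin property for every $e\in E(F)$. A graph is maximal triangle-free if it contains no triangle but adding any new edge creates a triangle. *)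

(* Defs.v *)
From mathcomp Require Import all_boot.
Set Implicit Arguments. Unset Strict Implicit. Unset Printing Implicit Defensive.

(* A simple graph: vertex type T : finType, adjacency e : rel T,
   symmetric and irreflexive (these are hypotheses of the theorem). *)

Definition triangle_free (T : finType) (e : rel T) : Prop :=
  ~ (exists x y w : T, [&& e x y, e y w & e x w]).

Definition maximal_triangle_free (T : finType) (e : rel T) : Prop :=
  triangle_free e /\
  (forall x y : T, x != y -> ~~ e x y -> exists w : T, e x w && e y w).

(* A subgraph H of G isomorphic to F, together with an isomorphism,
   is given by an injective edge-preserving map phi : V(F) -> V(G);
   H is then the image of F under phi (vertex set phi @: setT,
   edges phi(a)phi(b) for ab in E(F)). *)
Definition is_copy (TF TG : finType) (eF : rel TF) (eG : rel TG)
  (phi : TF -> TG) : Prop :=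
  injective phi /\ (forall a b : TF, eF a b -> eG (phi a) (phi b)).

Definition copy_vertices (TF TG : finType) (phi : TF -> TG) : {set TG} :=
  [set phi a | a : TF].

Definition is_twin (TG : finType) (eG : rel TG) (VH : {set TG}) (q q' : TG)
  : Prop :=
  q \in VH /\ (forall v : TG, v \in VH -> eG q v = eG q' v).

Definition swap_vertices (TG : finType) (VH : {set TG}) (q q' : TG)
  : {set TG} := q' |: (VH :\ q).

Definition F_twin_property (TF TG : finType) (eF : rel TF) (eG : rel TG)
  : Prop :=
  forall phi : TF -> TG, is_copy eF eG phi ->
  forall a b : TF, eF a b ->
  forall q' z' : TG,
    is_twin eG (copy_vertices phi) (phi a) q' ->
    is_twin eG (copy_vertices phi) (phi b) z' ->
    eG q' z'.

(* Main.v *)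
Require Import Defs.
From mathcomp Require Import all_boot.

Theorem lemma2p3 (TF TG : finType) (eF : rel TF) (eG : rel TG)
  (symF : symmetric eF) (irrF : irreflexive eF)
  (symG : symmetric eG) (irrG : irreflexive eG)
  (maxF : maximal_triangle_free eF)
  (tfG : triangle_free eG)
  (twG : F_twin_property eF eG)
  (phi : TF -> TG) (Hcopy : is_copy eF eG phi)
  (z z' : TG)
  (Hz : z \in copy_vertices phi)
  (Hz' : z' \notin copy_vertices phi)
  (Hzz' : is_twin eG (copy_vertices phi) z z')
  (q q' : TG)
  (Hq : q \in copy_vertices phi :\ z)
  (Hqq' : is_twin eG (swap_vertices (copy_vertices phi) z z') q q') :
  is_twin eG (copy_vertices phi) q q'.
Proof.
have [injphi edphi] := Hcopy.
have [tfF maxF'] := maxF.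
move: Hq; rewrite !inE => /andP [qz qV].
have [_ tzz] := Hzz'.
have [_ tqq] := Hqq'.
have inV' v : v \in copy_vertices phi -> v != z -> v \in swap_vertices (copy_vertices phi) z z'.
  by move=> vV vz; rewrite /swap_vertices !inE vz vV orbT.
have z'V' : z' \in swap_vertices (copy_vertices phi) z z' by rewrite /swap_vertices !inE eqxx.
have e1 : eG q z = eG q' z'.
  by rewrite (symG q z) tzz // symG tqq.
have indF a b : eG (phi a) (phi b) -> eF a b.
  move=> hab; case: (eqVneq a b) => [Eab|nab]; first by subst; rewrite irrG in hab.
  apply/negPn/negP => nF; have [w /andP [aw bw]] := maxF' a b nab nF.
  apply: tfG; exists (phi a), (phi b), (phi w).
  by rewrite hab (edphi _ _ aw) (edphi _ _ bw).
move: Hz qV => /imsetP [b _ Eb] /imsetP [a _ Eq]; subst q z.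
have nab : a != b.
  by apply/eqP => Eab; move: qz; rewrite Eab eqxx.
split; first by apply/imsetP; exists a.
move=> v /imsetP [c _ ->].
case: (eqVneq c b) => [->|ncb]; last first.
  by apply: tqq; apply: inV'; [apply/imsetP; exists c | apply: contra_neq ncb => /injphi].
rewrite e1.
case Eab: (eG (phi a) (phi b)).
-
  set phi' := fun x => if x == b then z' else phi x.
  have cvE : copy_vertices phi' = swap_vertices (copy_vertices phi) (phi b) z'.
    apply/setP => u; rewrite /swap_vertices !inE.
    apply/imsetP/idP.
    + move=> [x _ ->]; rewrite /phi'; case: (eqVneq x b) => [_|nxb]; first by rewrite eqxx.
      by rewrite (inj_eq injphi) nxb orbC /=; apply/orP; left; apply/imsetP; exists x.
    + case/orP => [/eqP ->|/andP [nvz /imsetP [x _ Eu]]]; first by exists b; rewrite // /phi' eqxx.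
      subst u; exists x => //; rewrite /phi'; case: (eqVneq x b) => // Exb; by subst; rewrite eqxx in nvz.
  have z'nV w : phi w != z'.
    by apply: contraNneq Hz' => <-; apply/imsetP; exists w.
  have copy' : is_copy eF eG phi'.
    split.
    + move=> x y; rewrite /phi'.
      case: (eqVneq x b) => [->|nxb]; case: (eqVneq y b) => [->|nyb] //.
      * by move=> E; move: (z'nV y); rewrite -E eqxx.
      * by move=> E; move: (z'nV x); rewrite E eqxx.
      * exact: injphi.
    + move=> x y exy; rewrite /phi'.
      case: (eqVneq x b) => [Exb|nxb]; case: (eqVneq y b) => [Eyb|nyb].
      * by subst; rewrite irrF in exy.
      * subst; rewrite -tzz; [exact: edphi | by apply/imsetP; exists y].
      * subst; rewrite symG -tzz; [rewrite symG; exact: edphi | by apply/imsetP; exists x].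
      * exact: edphi.
  have Fab := indF _ _ Eab.
  have p'a : phi' a = phi a by rewrite /phi' (negbTE nab).
  have p'b : phi' b = z' by rewrite /phi' eqxx.
  have := twG phi' copy' a b Fab q' (phi b).
  rewrite p'a p'b cvE => H.
  rewrite -e1 Eab; apply/esym; apply: H.
  + exact: Hqq'.
  + split => // u; rewrite /swap_vertices !inE => /orP [/eqP ->|/andP [nvz vV]].
    * by rewrite irrG symG -tzz ?irrG //; apply/imsetP; exists b.
    * by rewrite tzz.
- rewrite -e1 Eab; apply/esym/negbTE/negP => Eq'b.
  have nF : ~~ eF a b by apply: contraFN Eab; apply: edphi.
  have [w /andP [aw bw]] := maxF' a b nab nF.
  have nwb : w != b by apply: contraTneq bw => ->; rewrite irrF.
  have qw : eG q' (phi w).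
    rewrite -tqq; first exact: edphi.
    by apply: inV'; [apply/imsetP; exists w | apply: contra_neq nwb => /injphi].
  apply: tfG; exists q', (phi b), (phi w).
  by rewrite Eq'b qw (edphi _ _ bw).
Qed.
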